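(* Let $\ell_0\ge 2$ be an integer and let $\varphi_{\ell,k},\psi_{\ell,k}$ be the periodized, level-$\ell$ scaling functions and wavelets of the biorthogonal B-spline wavelet construction of order $(2,2)$ described in the context, and $\xi_q(x)=e^{2\pi i q x}$. Then for every integer $\ell\ge \ell_0$, every $k\in\{0,1,\dots,2^\ell-1\}$, every $q\in\mathbb{Z}\setminus\{0\}$, every $(\alpha_1,\alpha_2)\in\{0,1\}^2$ and every $\gamma\in[0,2]$, $$|(D^{\alpha_1}\varphi_{\ell,k},D^{\alpha_2}\xi_q)|\le 2^{\alpha_1+\alpha_2}\,2^{(\frac32-\gamma)\ell}\,|\pi q|^{\gamma-2+\alpha_1+\alpha_2},$$ $$|(D^{\alpha_1}\psi_{\ell,k},D^{\alpha_2}\xi_q)|\le 2^{\alpha_1+\alpha_2+1-\gamma}\,\|\mathbf b\|_2\,\|\mathbf b\|_0^{1/2}\,2^{(\frac32-\gamma)\ell}\,|\pi q|^{\gamma-2+\alpha_1+\alpha_2}.$$ Moreover, for $q=0$: $|(\varphi_{\ell,k}',\xi_0')|=|(\psi_{\ell,k}',\xi_0')|=0$, $|(\varphi_{\ell,k}',\xi_0)|=|(\psi_{\ell,k}',\xi_0)|=0$, $|(\varphi_{\ell,k},\xi_0)|=2^{-\ell/2}$ and $|(\psi_{\ell,k},\xi_0)|=0$.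
   Context: Functions are complex-valued on $\mathcal{D}=(0,1)$, $(u,v)=\int_0^1 u(x)\overline{v(x)}\,dx$, $D^0u=u$, $D^1u=u'$ (distributional derivative). Let $\varphi(x)=\max\{0,1-|x|\}$ be the hat function (the primal scaling function of the biorthogonal B-spline wavelets of order $(d,\tilde d)=(2,2)$, with primal filter $\mathbf a_{[-1:1]}=[\tfrac12,1,\tfrac12]$, dual filter $\tilde{\mathbf a}_{[-2:2]}=[-\tfrac14,\tfrac12,\tfrac32,\tfrac12,-\tfrac14]$), and let the mother wavelet be $\psi(x)=\sum_{j=-1}^{3} b_j\varphi(2x-j)$ with primal wavelet filter $\mathbf b=(b_{-1},b_0,b_1,b_2,b_3)=(\tfrac14,\tfrac12,-\tfrac32,\tfrac12,\tfrac14)$; $\|\mathbf b\|_2$ is its Euclidean norm and $\|\mathbf b\|_0$ its number of nonzero entries. For $\ell\in\mathbb{N}_0$, $k\in\mathbb{Z}$ set $\varphi_{\ell,k}(x)=2^{\ell/2}\varphi(2^\ell x-k)$ and $\psi_{\ell,k}(x)=2^{\ell/2}\psi(2^\ell x-k)$; in the statement these are replaced by their 1-periodizations $f^{\rm per}(x)=\sum_{j\in\mathbb{Z}}f(x+j)$ restricted to $(0,1)$, indexed by $k\in\{0,\dots,2^\ell-1\}$. *)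

(* Defs.v *)
From Stdlib Require Import Reals List.
Import ListNotations.
From Coquelicot Require Import Coquelicot.
Open Scope R_scope.

Definition hat (x : R) : R := Rmax 0 (1 - Rabs x).

(* Primal wavelet filter b = (b_{-1}, b_0, b_1, b_2, b_3). *)
Definition bfilt : list R := [1/4; 1/2; -3/2; 1/2; 1/4].

Definition psi (x : R) : R :=
  fold_right Rplus 0
    (map (fun i => nth i bfilt 0 * hat (2 * x - (INR i - 1))) (seq 0 (length bfilt))).

Definition bnorm2 : R := sqrt (fold_right Rplus 0 (map (fun c => c * c) bfilt)).
Definition bnorm0 : nat := length (filter (fun c => if Req_EM_T c 0 then false else true) bfilt).

Definition dilate (f : R -> R) (l k : nat) (x : R) : R :=
  Rpower 2 (INR l / 2) * f (2 ^ l * x - INR k).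

(* 1-periodization  f^per(x) = sum_{j in Z} f(x + j), the sum over Z written
   as the sum over j >= 0 plus the sum over j <= -1. *)
Definition per (f : R -> R) (x : R) : R :=
  Series (fun n => f (x + INR n)) + Series (fun n => f (x - INR (S n))).

Definition phi_lk (l k : nat) : R -> R := per (dilate hat l k).
Definition psi_lk (l k : nat) : R -> R := per (dilate psi l k).

Definition xi (q : Z) (x : R) : C :=
  (cos (2 * PI * IZR q * x), sin (2 * PI * IZR q * x)).

(* D^0 u = u, D^1 u = u' (componentwise derivative of real and imaginary part;
   for the piecewise-linear functions involved this is the a.e. / distributional
   derivative, point values at the finitely many kinks being irrelevant for the
   integrals below). *)
Definition Dc (a : nat) (f : R -> C) : R -> C :=
  match a with
  | O => f
  | _ => fun x => (Derive (fun t => fst (f t)) x, Derive (fun t => snd (f t)) x)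
  end.

Definition ip (u v : R -> C) : C :=
  (RInt (fun x => fst (Cmult (u x) (Cconj (v x)))) 0 1,
   RInt (fun x => snd (Cmult (u x) (Cconj (v x)))) 0 1).

Definition cf (f : R -> R) : R -> C := fun x => RtoC (f x).

(* Main.v *)
Require Import Defs.
From Stdlib Require Import Reals Lra Lia ZArith List.
From Coquelicot Require Import Coquelicot.
Open Scope R_scope.

Lemma hat_alt x : hat x = ((1 - Rabs x) + Rabs (1 - Rabs x)) / 2.
Proof. unfold hat, Rmax. destruct (Rle_dec 0 (1 - Rabs x)).
 rewrite (Rabs_right (1 - Rabs x)); lra. rewrite (Rabs_left (1 - Rabs x)); lra. Qed.

Lemma hat_cont x : continuous hat x.
Proof.
  apply continuous_ext with (f := fun x => ((1 - Rabs x) + Rabs (1 - Rabs x)) / 2).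
  intros; symmetry; apply hat_alt.
  apply (continuous_mult (fun x => (1 - Rabs x) + Rabs (1 - Rabs x)) (fun _ => /2)); [|apply continuous_const].
  apply (continuous_plus (fun x => 1 - Rabs x) (fun x => Rabs (1 - Rabs x))).
  apply (continuous_minus (fun _ => 1) Rabs). apply continuous_const. apply continuous_Rabs.
  apply continuous_Rabs_comp.
  apply (continuous_minus (fun _ => 1) Rabs). apply continuous_const. apply continuous_Rabs.
Qed.

Lemma hat_out y : 1 <= Rabs y -> hat y = 0.
Proof. intros; unfold hat, Rmax; destruct (Rle_dec 0 (1 - Rabs y)); lra. Qed.
Lemma hat_pos y : 0 <= y <= 1 -> hat y = 1 - y.
Proof. intros; unfold hat, Rmax; rewrite Rabs_right by lra; destruct Rle_dec; lra. Qed.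
Lemma hat_neg y : -1 <= y <= 0 -> hat y = 1 + y.
Proof. intros; unfold hat, Rmax; rewrite Rabs_left1 by lra; destruct Rle_dec; lra. Qed.

Lemma hat_cell (z : Z) y : IZR z <= y <= IZR z + 1 ->
  hat y = hat (IZR z) + (y - IZR z) * (hat (IZR z + 1) - hat (IZR z)).
Proof.
  intros H.
  destruct (Z_lt_le_dec z (-1)) as [H1|H1].
  { assert (IZR z <= -2). { assert (z <= -2)%Z by lia. apply IZR_le in H0. exact H0. }
    rewrite (hat_out y), (hat_out (IZR z)), (hat_out (IZR z + 1)); try (rewrite Rabs_left; lra). lra. }
  destruct (Z.eq_dec z (-1)) as [->|H2].
  { replace (IZR (-1)) with (-1) in * by reflexivity. rewrite (hat_neg y) by lra. rewrite (hat_out (-1)) by (rewrite Rabs_left; lra). rewrite (hat_neg (-1+1)) by lra. lra. }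
  destruct (Z.eq_dec z 0) as [->|H3].
  { rewrite hat_pos by lra. rewrite hat_pos by lra. rewrite hat_out by (rewrite Rabs_right; lra). lra. }
  assert (1 <= IZR z). { apply IZR_le; lia. }
  rewrite (hat_out y), (hat_out (IZR z)), (hat_out (IZR z + 1)); try (rewrite Rabs_right; lra). lra.
Qed.

Definition CA (N : R) (A : R -> R) := forall (m : Z) x,
  IZR m / N <= x <= (IZR m + 1) / N ->
  A x = A (IZR m / N) + (N * x - IZR m) * (A ((IZR m + 1) / N) - A (IZR m / N)).

Lemma is_RInt_eq (f : R -> R) a b l l' : is_RInt f a b l -> l = l' -> is_RInt f a b l'.
Proof. intros H ->; exact H. Qed.

Lemma RInt_correct_R (f : R -> R) a b : (forall x, continuous f x) -> is_RInt f a b (RInt f a b).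
Proof. intros H. apply (RInt_correct (V:=R_CompleteNormedModule)). apply (ex_RInt_continuous (V:=R_CompleteNormedModule)). intros; apply H. Qed.

Lemma cont_Rplus (f g : R -> R) x : continuous f x -> continuous g x -> continuous (fun t => f t + g t) x.
Proof. intros; apply (continuous_plus f g); auto. Qed.
Lemma cont_Rmult (f g : R -> R) x : continuous f x -> continuous g x -> continuous (fun t => f t * g t) x.
Proof. intros; apply (continuous_mult f g); auto. Qed.
Lemma cont_Rminus (f g : R -> R) x : continuous f x -> continuous g x -> continuous (fun t => f t - g t) x.
Proof. intros; apply (continuous_minus f g); auto. Qed.

Lemma cell_ibp (N : R) (m : nat) (F A g g' : R -> R) :
  0 < N -> CA N A -> (forall x, 0 <= x <= 1 -> F x = A x) -> INR m + 1 <= N ->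
  (forall x, is_derive g x (g' x)) -> (forall x, continuous g x) -> (forall x, continuous g' x) ->
  is_RInt (fun x => Derive F x * g x + A x * g' x) (INR m / N) ((INR m + 1) / N)
    (A ((INR m + 1) / N) * g ((INR m + 1) / N) - A (INR m / N) * g (INR m / N)).
Proof.
  intros HN HCA HF Hm Hg Hgc Hg'c.
  set (u := INR m / N). set (v := (INR m + 1) / N).
  assert (Hu0 : 0 <= u). { unfold u. apply Rdiv_le_0_compat; [apply pos_INR|lra]. }
  assert (Hv1 : v <= 1). { unfold v. apply (Rmult_le_reg_r N); [lra|]. unfold Rdiv; rewrite Rmult_assoc, Rinv_l by lra. lra. }
  assert (Huv : u < v). { unfold u, v. apply Rmult_lt_compat_r; [apply Rinv_0_lt_compat; lra| lra]. }
  set (aff := fun x => A u + (N * x - INR m) * (A v - A u)).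
  set (s := N * (A v - A u)).
  assert (Haff : forall x, u <= x <= v -> A x = aff x).
  { intros x Hx. unfold aff, u, v in *. rewrite INR_IZR_INZ in *. apply HCA. exact Hx. }
  assert (Hda : forall x, is_derive aff x s).
  { intros x. unfold aff, s. auto_derive; auto. ring. }
  assert (Hd : forall x, is_derive (fun x => aff x * g x) x (s * g x + aff x * g' x)).
  { intros x. apply (is_derive_mult aff g x s (g' x)); auto. intros; apply Rmult_comm. }
  assert (Hc : forall x, continuous (fun x => s * g x + aff x * g' x) x).
  { intros x. apply cont_Rplus. apply cont_Rmult. apply continuous_const. auto.
    apply cont_Rmult; auto. apply (@ex_derive_continuous R_AbsRing R_NormedModule aff x). eexists; apply Hda. }
  pose proof (is_RInt_derive (fun x => aff x * g x) (fun x => s * g x + aff x * g' x) u v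
     (fun x _ => Hd x) (fun x _ => Hc x)) as H.
  assert (Hval: A v * g v - A u * g u = minus (aff v * g v) (aff u * g u)).
  { rewrite (Haff u), (Haff v) by lra. reflexivity. }
  rewrite Hval. apply is_RInt_ext with (f := fun x => s * g x + aff x * g' x); [|exact H].
  - intros x Hx. rewrite Rmin_left in Hx by lra. rewrite Rmax_right in Hx by lra.
    rewrite (Haff x) by lra. f_equal. f_equal. symmetry. apply is_derive_unique.
    apply (is_derive_ext_loc aff F x s); [|apply Hda].
    assert (Hp: 0 < Rmin (x - u) (v - x)) by (apply Rmin_glb_lt; lra).
    exists (mkposreal _ Hp). intros t Ht.
    unfold ball in Ht; simpl in Ht; unfold AbsRing_ball, abs, minus, plus, opp in Ht; simpl in Ht.
    apply Rabs_def2 in Ht. pose proof (Rmin_l (x-u) (v-x)). pose proof (Rmin_r (x-u) (v-x)).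
    rewrite HF by lra. symmetry. apply Haff. lra.
Qed.

Lemma ibp (Nn : nat) (F A g g' : R -> R) :
  (0 < Nn)%nat -> CA (INR Nn) A -> (forall x, 0 <= x <= 1 -> F x = A x) -> (forall x, continuous A x) ->
  (forall x, is_derive g x (g' x)) -> (forall x, continuous g x) -> (forall x, continuous g' x) ->
  is_RInt (fun x => Derive F x * g x) 0 1 (A 1 * g 1 - A 0 * g 0 - RInt (fun x => A x * g' x) 0 1).
Proof.
  intros HN HCA HF HAc Hg Hgc Hg'c.
  set (N := INR Nn).
  assert (HN' : 0 < N) by (apply lt_0_INR; exact HN).
  assert (Hall : forall M, (M <= Nn)%nat ->
    is_RInt (fun x => Derive F x * g x + A x * g' x) 0 (INR M / N)
      (A (INR M / N) * g (INR M / N) - A 0 * g 0)).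
  { induction M as [|M IH]; intros HM.
    - replace (INR 0 / N) with 0 by (simpl; field; lra).
      eapply is_RInt_eq. apply is_RInt_point. simpl. unfold zero; simpl. ring.
    - eapply is_RInt_eq. eapply is_RInt_Chasles. apply IH. lia.
      rewrite S_INR. apply cell_ibp; auto.
      rewrite <- S_INR. apply le_INR. exact HM.
      rewrite S_INR. unfold plus; simpl. ring. }
  specialize (Hall Nn (le_n _)). replace (INR Nn / N) with 1 in Hall by (fold N; field; lra).
  assert (HAg : is_RInt (fun x => A x * g' x) 0 1 (RInt (fun x => A x * g' x) 0 1)).
  { apply RInt_correct_R. intros; apply cont_Rmult; auto. }
  pose proof (is_RInt_minus _ _ _ _ _ _ Hall HAg) as H.
  eapply is_RInt_ext; [|exact H]. intros; unfold minus, plus, opp; simpl. ring.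
Qed.

Lemma CA_hat N a : 0 < N -> (exists z, a = IZR z) -> CA N (fun x => hat (N * x - a)).
Proof.
  intros HN [z ->] m x Hx.
  assert (Hy : IZR (m - z) <= N * x - IZR z <= IZR (m - z) + 1).
  { rewrite minus_IZR. destruct Hx as [H1 H2].
    apply (Rmult_le_compat_l N) in H1; [|lra]. apply (Rmult_le_compat_l N) in H2; [|lra].
    replace (N * (IZR m / N)) with (IZR m) in H1 by (field; lra).
    replace (N * ((IZR m + 1) / N)) with (IZR m + 1) in H2 by (field; lra). lra. }
  rewrite (hat_cell _ _ Hy).
  replace (N * (IZR m / N) - IZR z) with (IZR (m - z)) by (rewrite minus_IZR; field; lra).
  replace (N * ((IZR m + 1) / N) - IZR z) with (IZR (m - z) + 1) by (rewrite minus_IZR; field; lra).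
  rewrite minus_IZR. ring.
Qed.

Lemma CA_plus N A B : CA N A -> CA N B -> CA N (fun x => A x + B x).
Proof. intros HA HB m x Hx. rewrite (HA m x Hx), (HB m x Hx). ring. Qed.
Lemma CA_scal N c A : CA N A -> CA N (fun x => c * A x).
Proof. intros HA m x Hx. rewrite (HA m x Hx). ring. Qed.
Lemma CA_ext N A B : (forall x, A x = B x) -> CA N A -> CA N B.
Proof. intros He HA m x Hx. rewrite <- !He. apply HA; auto. Qed.

Lemma ex_series_0 : ex_series (fun _ : nat => 0).
Proof.
  apply ex_series_ext with (a := fun n => scal 0 ((1/2)^n)).
  intros; unfold scal; simpl; unfold mult; simpl; ring.
  apply (ex_series_scal_l (K:=R_AbsRing) (V:=R_NormedModule) 0 (fun n => (1/2)^n)). apply ex_series_geom. rewrite Rabs_right; lra.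
Qed.

Lemma Series_fin2 (u : nat -> R) : (forall n, (2 <= n)%nat -> u n = 0) -> Series u = u 0%nat + u 1%nat.
Proof.
  intros H.
  assert (Hz : forall k, u (2 + k)%nat = 0) by (intros; apply H; lia).
  assert (He : ex_series u).
  { apply (ex_series_incr_n u 2). eapply ex_series_ext; [|apply ex_series_0]. intros k; simpl; symmetry; apply (Hz k). }
  rewrite (Series_incr_n u 2) by (auto; lia).
  rewrite (Series_ext _ (fun n => 0 * 1)) by (intros k; rewrite (Hz k); ring).
  rewrite Series_scal_l. rewrite Rmult_0_l, Rplus_0_r. reflexivity.
Qed.

Lemma per3 f x : (forall y, 2 <= y -> f y = 0) -> (forall y, y <= -1 -> f y = 0) -> 0 <= x <= 1 ->
  per f x = f (x - 1) + f x + f (x + 1).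
Proof.
  intros H2 H1 Hx. unfold per.
  rewrite Series_fin2. rewrite (Series_fin2 (fun n => f (x - INR (S n)))).
  - change (INR (S 0)) with 1. change (INR (S 1)) with (1 + 1). change (INR 0) with 0.
    rewrite (H1 (x - (1 + 1))) by lra. rewrite Rplus_0_r. ring.
  - intros n Hn. apply H1. apply le_INR in Hn. rewrite S_INR. change (INR 2) with (1+1) in Hn. lra.
  - intros n Hn. apply H2. apply le_INR in Hn. change (INR 2) with (1+1) in Hn. lra.
Qed.

Lemma shift3 f P : (forall x, continuous f x) -> (forall x, continuous P x) -> (forall x, P (x + 1) = P x) ->
  is_RInt (fun x => (f (x - 1) + f x + f (x + 1)) * P x) 0 1 (RInt (fun x => f x * P x) (-1) 2).
Proof.
  intros Hf HP Hper. set (h := fun x => f x * P x).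
  assert (Hc : forall x, continuous h x) by (intros; apply cont_Rmult; auto).
  assert (H1 : is_RInt (fun y => scal 1 (h (1 * y + -1))) 0 1 (RInt h (-1) 0)).
  { apply (is_RInt_comp_lin (V:=R_NormedModule) h 1 (-1) 0 1). replace (1 * 0 + -1) with (-1) by ring. replace (1 * 1 + -1) with 0 by ring. apply RInt_correct_R; auto. }
  assert (H2 : is_RInt (fun y => scal 1 (h (1 * y + 0))) 0 1 (RInt h 0 1)).
  { apply (is_RInt_comp_lin (V:=R_NormedModule) h 1 0 0 1). replace (1 * 0 + 0) with 0 by ring. replace (1 * 1 + 0) with 1 by ring. apply RInt_correct_R; auto. }
  assert (H3 : is_RInt (fun y => scal 1 (h (1 * y + 1))) 0 1 (RInt h 1 2)).
  { apply (is_RInt_comp_lin (V:=R_NormedModule) h 1 1 0 1). replace (1 * 0 + 1) with 1 by ring. replace (1 * 1 + 1) with 2 by ring. apply RInt_correct_R; auto. }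
  pose proof (is_RInt_plus _ _ _ _ _ _ (is_RInt_plus _ _ _ _ _ _ H1 H2) H3) as H.
  assert (Hv : RInt h (-1) 2 = plus (plus (RInt h (-1) 0) (RInt h 0 1)) (RInt h 1 2)).
  { apply (is_RInt_unique (V := R_CompleteNormedModule)).
    apply (is_RInt_Chasles (V:=R_NormedModule) h (-1) 1 2). apply (is_RInt_Chasles (V:=R_NormedModule) h (-1) 0 1).
    all: apply RInt_correct_R; auto. }
  apply (is_RInt_eq _ _ _ (plus (plus (RInt h (-1) 0) (RInt h 0 1)) (RInt h 1 2))); [| exact (eq_sym Hv)].
  eapply is_RInt_ext; [|exact H].
  intros x _. unfold h, scal, plus; simpl; unfold mult; simpl.
  replace (1 * x + -1) with (x - 1) by ring. replace (1 * x + 0) with x by ring. replace (1 * x + 1) with (x + 1) by ring.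
  rewrite <- (Hper (x - 1)). rewrite <- (Hper x). replace (x - 1 + 1) with x by ring. ring_simplify.
  rewrite (Hper x). ring.
Qed.

Definition J (w : R) : R := if Req_EM_T w 0 then 1 else 2 * (1 - cos w) / (w * w).

Lemma piece (F f h : R -> R) a b : a < b -> (forall x, is_derive F x (f x)) -> (forall x, continuous f x) ->
  (forall x, a < x < b -> h x = f x) -> is_RInt h a b (F b - F a).
Proof.
  intros Hab HF Hf Hh.
  pose proof (is_RInt_derive (V:=R_CompleteNormedModule) F f a b (fun x _ => HF x) (fun x _ => Hf x)) as H.
  eapply is_RInt_ext; [|exact H]. intros x Hx. rewrite Rmin_left in Hx by lra. rewrite Rmax_right in Hx by lra.
  symmetry; apply Hh; lra.
Qed.

Ltac fld := match goal with |- @eq _ ?a ?b => change (@eq R a b) end; field.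
Ltac rng := match goal with |- @eq _ ?a ?b => change (@eq R a b) end; ring.
Ltac smooth := intros ?; apply (@ex_derive_continuous R_AbsRing R_NormedModule); auto_derive; auto.

Lemma chasles3 (h : R -> R) a b c v1 v2 v : is_RInt h a b v1 -> is_RInt h b c v2 -> v1 + v2 = v -> is_RInt h a c v.
Proof. intros H1 H2 <-. apply (is_RInt_Chasles (V:=R_NormedModule) h a b c v1 v2 H1 H2). Qed.

Lemma base_cos w : is_RInt (fun z => hat z * cos (w * z)) (-1) 1 (J w).
Proof.
  unfold J; destruct (Req_EM_T w 0) as [->|Hw].
  - apply chasles3 with (b := 0) (v1 := 1/2) (v2 := 1/2); [| |lra].
    + eapply is_RInt_eq. apply (piece (fun z => z + z*z/2) (fun z => 1 + z)). lra.
      intros; auto_derive; auto; field. smooth.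
      intros x Hx. rewrite Rmult_0_l, cos_0, hat_neg by lra. ring. fld.
    + eapply is_RInt_eq. apply (piece (fun z => z - z*z/2) (fun z => 1 - z)). lra.
      intros; auto_derive; auto; field. smooth.
      intros x Hx. rewrite Rmult_0_l, cos_0, hat_pos by lra. ring. fld.
  - apply chasles3 with (b := 0) (v1 := (1 - cos w)/(w*w)) (v2 := (1 - cos w)/(w*w)); [| |field; auto].
    + eapply is_RInt_eq. apply (piece (fun z => (1+z)*sin(w*z)/w + cos(w*z)/(w*w)) (fun z => (1 + z) * cos (w*z))). lra.
      intros; auto_derive; auto; field; auto. smooth.
      intros x Hx. rewrite hat_neg by lra. ring.
      replace (w * 0) with 0 by ring. replace (w * -1) with (- w) by ring. rewrite sin_0, cos_0, cos_neg. fld; auto.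
    + eapply is_RInt_eq. apply (piece (fun z => (1-z)*sin(w*z)/w - cos(w*z)/(w*w)) (fun z => (1 - z) * cos (w*z))). lra.
      intros; auto_derive; auto; field; auto. smooth.
      intros x Hx. rewrite hat_pos by lra. ring.
      replace (w * 0) with 0 by ring. replace (w * 1) with w by ring. rewrite sin_0, cos_0. fld; auto.
Qed.

Lemma base_sin w : is_RInt (fun z => hat z * sin (w * z)) (-1) 1 0.
Proof.
  destruct (Req_EM_T w 0) as [->|Hw].
  - eapply is_RInt_eq. eapply is_RInt_ext; [|apply (is_RInt_const (V:=R_NormedModule) (-1) 1 0)].
    intros x _. rewrite Rmult_0_l, sin_0. rng. unfold scal; simpl; unfold mult; simpl; ring.
  - apply chasles3 with (b := 0) (v1 := -1/w + sin w/(w*w)) (v2 := 1/w - sin w/(w*w)); [| |field; auto].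
    + eapply is_RInt_eq. apply (piece (fun z => -(1+z)*cos(w*z)/w + sin(w*z)/(w*w)) (fun z => (1 + z) * sin (w*z))). lra.
      intros; auto_derive; auto; field; auto. smooth.
      intros x Hx. rewrite hat_neg by lra. ring.
      replace (w * 0) with 0 by ring. replace (w * -1) with (- w) by ring. rewrite sin_0, cos_0, sin_neg. fld; auto.
    + eapply is_RInt_eq. apply (piece (fun z => -(1-z)*cos(w*z)/w - sin(w*z)/(w*w)) (fun z => (1 - z) * sin (w*z))). lra.
      intros; auto_derive; auto; field; auto. smooth.
      intros x Hx. rewrite hat_pos by lra. ring.
      replace (w * 0) with 0 by ring. replace (w * 1) with w by ring. rewrite sin_0, cos_0. fld; auto.
Qed.

Lemma phase_cos w b : is_RInt (fun z => hat z * cos (w * z + b)) (-1) 1 (cos b * J w).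
Proof.
  pose proof (is_RInt_minus (V:=R_NormedModule) _ _ _ _ _ _
    (is_RInt_scal (V:=R_NormedModule) _ _ _ (cos b) _ (base_cos w))
    (is_RInt_scal (V:=R_NormedModule) _ _ _ (sin b) _ (base_sin w))) as H.
  eapply is_RInt_eq. eapply is_RInt_ext; [|exact H].
  intros x _. unfold minus, plus, opp, scal; simpl; unfold mult; simpl. rewrite cos_plus. ring.
  unfold minus, plus, opp, scal; simpl; unfold mult; simpl. ring.
Qed.

Lemma phase_sin w b : is_RInt (fun z => hat z * sin (w * z + b)) (-1) 1 (sin b * J w).
Proof.
  pose proof (is_RInt_plus (V:=R_NormedModule) _ _ _ _ _ _
    (is_RInt_scal (V:=R_NormedModule) _ _ _ (cos b) _ (base_sin w))
    (is_RInt_scal (V:=R_NormedModule) _ _ _ (sin b) _ (base_cos w))) as H.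
  eapply is_RInt_eq. eapply is_RInt_ext; [|exact H].
  intros x _. unfold minus, plus, opp, scal; simpl; unfold mult; simpl. rewrite sin_plus. ring.
  unfold minus, plus, opp, scal; simpl; unfold mult; simpl. ring.
Qed.

Lemma extend (T : R -> R) A B v : A <= -1 -> 1 <= B ->
  is_RInt (fun z => hat z * T z) (-1) 1 v -> is_RInt (fun z => hat z * T z) A B v.
Proof.
  intros HA HB H.
  assert (Z1 : is_RInt (fun z => hat z * T z) A (-1) 0).
  { eapply is_RInt_eq. eapply is_RInt_ext; [|apply (is_RInt_const (V:=R_NormedModule) A (-1) 0)].
    intros x Hx. rewrite Rmin_left in Hx by lra. rewrite Rmax_right in Hx by lra.
    rewrite hat_out by (rewrite Rabs_left; lra). rng.
    unfold scal; simpl; unfold mult; simpl; ring. }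
  assert (Z2 : is_RInt (fun z => hat z * T z) 1 B 0).
  { eapply is_RInt_eq. eapply is_RInt_ext; [|apply (is_RInt_const (V:=R_NormedModule) 1 B 0)].
    intros x Hx. rewrite Rmin_left in Hx by lra. rewrite Rmax_right in Hx by lra.
    rewrite hat_out by (rewrite Rabs_right; lra). rng.
    unfold scal; simpl; unfold mult; simpl; ring. }
  apply chasles3 with (-1) 0 v. exact Z1.
  apply chasles3 with 1 v 0. exact H. exact Z2. ring. ring.
Qed.

Lemma atom_gen (Tr : R -> R) (N a th : R) v : 0 < N -> 1 - N <= a -> a + 1 <= 2 * N ->
  is_RInt (fun z => hat z * Tr (th / N * z + th * a / N)) (-1) 1 v ->
  is_RInt (fun x => hat (N * x - a) * Tr (th * x)) (-1) 2 (v / N).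
Proof.
  intros HN Ha1 Ha2 H0.
  set (G := fun z => hat z * Tr (th / N * z + th * a / N)).
  assert (H1 : is_RInt G (N * -1 + - a) (N * 2 + - a) v). { apply extend; auto; lra. }
  pose proof (is_RInt_comp_lin (V:=R_NormedModule) G N (-a) (-1) 2 v H1) as H2.
  pose proof (is_RInt_scal (V:=R_NormedModule) _ _ _ (/ N) _ H2) as H3.
  eapply is_RInt_eq. eapply is_RInt_ext; [|exact H3].
  intros x _. unfold G, scal; simpl; unfold mult; simpl.
  replace (th / N * (N * x + - a) + th * a / N) with (th * x) by (field; lra).
  replace (N * x + - a) with (N * x - a) by ring. field; lra.
  unfold scal; simpl; unfold mult; simpl. field; lra.
Qed.

Lemma atom_cos N a th : 0 < N -> 1 - N <= a -> a + 1 <= 2 * N ->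
  is_RInt (fun x => hat (N * x - a) * cos (th * x)) (-1) 2 (cos (th * a / N) * J (th / N) / N).
Proof. intros. apply (atom_gen cos); auto. apply phase_cos. Qed.

Lemma atom_sin N a th : 0 < N -> 1 - N <= a -> a + 1 <= 2 * N ->
  is_RInt (fun x => hat (N * x - a) * sin (th * x)) (-1) 2 (sin (th * a / N) * J (th / N) / N).
Proof. intros. apply (atom_gen sin); auto. apply phase_sin. Qed.

Lemma trig_perZ y q : cos (y + 2 * PI * IZR q) = cos y /\ sin (y + 2 * PI * IZR q) = sin y.
Proof.
  destruct q as [|p|p].
  - replace (y + 2 * PI * IZR 0) with y by (simpl; ring). auto.
  - rewrite <- (positive_nat_Z p), <- INR_IZR_INZ.
    replace (2 * PI * INR (Pos.to_nat p)) with (2 * INR (Pos.to_nat p) * PI) by ring.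
    split; [apply cos_period|apply sin_period].
  - change (Z.neg p) with (- Z.pos p)%Z. rewrite opp_IZR, <- (positive_nat_Z p), <- INR_IZR_INZ.
    set (n := Pos.to_nat p).
    rewrite <- (cos_period (y + 2 * PI * - INR n) n), <- (sin_period (y + 2 * PI * - INR n) n).
    replace (y + 2 * PI * - INR n + 2 * INR n * PI) with y by ring. auto.
Qed.

Lemma sin_sq_le t : sin t * sin t <= t * t.
Proof.
  assert (H : forall t, 0 <= t -> sin t * sin t <= t * t).
  { clear t. intros t Ht. destruct (Rle_lt_dec 1 t).
    - pose proof (SIN_bound t). nra.
    - pose proof PI2_1. assert (0 <= sin t) by (apply sin_ge_0; lra).
      destruct (Req_dec t 0) as [->|Hn]. rewrite sin_0; lra.
      pose proof (sin_lt_x t ltac:(lra)). nra. }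
  destruct (Rle_lt_dec 0 t). auto.
  replace (sin t * sin t) with (sin (-t) * sin (-t)) by (rewrite sin_neg; ring).
  replace (t * t) with ((-t) * (-t)) by ring. apply H; lra.
Qed.

Lemma J_bounds w : 0 <= J w <= 1 /\ (w <> 0 -> J w <= 4 / (w * w)).
Proof.
  unfold J; destruct (Req_EM_T w 0) as [->|Hw].
  - split; [lra|]. intros H; lra.
  - assert (Hc : 1 - cos w = 2 * (sin (w/2) * sin (w/2))).
    { replace w with (2 * (w/2)) at 1 by field. rewrite cos_2a_sin. ring. }
    pose proof (sin_sq_le (w/2)) as Hs. pose proof (COS_bound w).
    assert (Hw2 : 0 < w * w) by (apply Rsqr_pos_lt in Hw; unfold Rsqr in Hw; lra).
    assert (Hiw : 0 < / (w * w)) by (apply Rinv_0_lt_compat; lra).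
    unfold Rdiv. split; [split|].
    + apply Rmult_le_pos; lra.
    + apply (Rmult_le_reg_r (w * w)); auto. rewrite Rmult_assoc, Rinv_l by lra.
      rewrite Hc. replace ((w/2) * (w/2)) with (w * w / 4) in Hs by field. lra.
    + intros _. apply Rmult_le_compat_r; lra.
Qed.

Lemma exp_mono x y : x <= y -> exp x <= exp y.
Proof. intros H. destruct (Rle_lt_or_eq_dec _ _ H) as [Hlt|Heq]. left; apply exp_increasing; auto. rewrite Heq; lra. Qed.

Lemma interp s X g : 0 < s -> 0 <= g <= 2 -> X <= 1 -> X <= / (s * s) -> X <= Rpower s (g - 2).
Proof.
  intros Hs Hg H1 H2. unfold Rpower.
  destruct (Rle_lt_dec 1 s) as [Hs1|Hs1].
  - assert (Hl : 0 <= ln s).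
    { destruct (Req_dec s 1) as [->|Hn]. rewrite ln_1; lra. left. rewrite <- ln_1. apply ln_increasing; lra. }
    apply Rle_trans with (exp (-2 * ln s)).
    + replace (-2 * ln s) with (ln (/ (s * s))) by (rewrite ln_Rinv, ln_mult by nra; ring).
      rewrite exp_ln by (apply Rinv_0_lt_compat; nra). auto.
    + apply exp_mono. nra.
  - assert (Hl : ln s < 0) by (rewrite <- ln_1; apply ln_increasing; lra).
    apply Rle_trans with 1; auto. pose proof (exp_ineq1_le ((g - 2) * ln s)). nra.
Qed.

Lemma sqrt_scale c X Y X' Y' : X' * X' = (c * X) * (c * X) -> Y' * Y' = (c * Y) * (c * Y) ->
  sqrt (X' ^ 2 + Y' ^ 2) = Rabs c * sqrt (X ^ 2 + Y ^ 2).
Proof.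
  intros H1 H2. replace (X' ^ 2 + Y' ^ 2) with (c² * (X ^ 2 + Y ^ 2)) by (unfold Rsqr; simpl; nra).
  rewrite sqrt_mult_alt by apply Rle_0_sqr. rewrite sqrt_Rsqr_abs. reflexivity.
Qed.

Lemma tri2 x1 y1 x2 y2 : sqrt ((x1 + x2) ^ 2 + (y1 + y2) ^ 2) <= sqrt (x1 ^ 2 + y1 ^ 2) + sqrt (x2 ^ 2 + y2 ^ 2).
Proof. exact (Cmod_triangle (x1, y1) (x2, y2)). Qed.

Lemma unit_term b c s : c * c + s * s = 1 -> sqrt ((b * c) ^ 2 + (b * s) ^ 2) = Rabs b.
Proof.
  intros H. replace ((b * c) ^ 2 + (b * s) ^ 2) with (b²) by (unfold Rsqr; simpl; nra).
  apply sqrt_Rsqr_abs.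
Qed.

Ltac smooth0 := apply (@ex_derive_continuous R_AbsRing R_NormedModule); auto_derive; auto.

Lemma RInt01_ext (f g : R -> R) : (forall x, 0 < x < 1 -> f x = g x) -> RInt f 0 1 = RInt g 0 1.
Proof. intros H. apply RInt_ext. intros x Hx. rewrite Rmin_left in Hx by lra. rewrite Rmax_right in Hx by lra. auto. Qed.

Lemma RInt01_scal c (f : R -> R) : (forall x, continuous f x) -> RInt (fun x => c * f x) 0 1 = c * RInt f 0 1.
Proof.
  intros Hf. apply (is_RInt_unique (V:=R_CompleteNormedModule)).
  exact (is_RInt_scal (V:=R_NormedModule) _ _ _ c _ (RInt_correct_R f 0 1 Hf)).
Qed.

Lemma ibp0 (Nn : nat) (F A g g' : R -> R) :
  (0 < Nn)%nat -> CA (INR Nn) A -> (forall x, 0 <= x <= 1 -> F x = A x) -> (forall x, continuous A x) ->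
  A 1 = A 0 -> (forall x, is_derive g x (g' x)) -> (forall x, continuous g x) -> (forall x, continuous g' x) ->
  g 1 = g 0 ->
  RInt (fun x => Derive F x * g x) 0 1 = - RInt (fun x => A x * g' x) 0 1.
Proof.
  intros HN HCA HF HAc HA Hg Hgc Hg'c Hg1.
  rewrite (is_RInt_unique (V:=R_CompleteNormedModule) _ _ _ _ (ibp Nn F A g g' HN HCA HF HAc Hg Hgc Hg'c)).
  rewrite HA, Hg1. rng.
Qed.

Lemma sq_fin c X Y X' Y' : X' * X' + Y' * Y' = (c * c) * (X * X + Y * Y) ->
  sqrt (X' ^ 2 + Y' ^ 2) = Rabs c * sqrt (X ^ 2 + Y ^ 2).
Proof.
  intros H. replace (X' ^ 2 + Y' ^ 2) with (c² * (X ^ 2 + Y ^ 2)) by (unfold Rsqr; simpl; nra).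
  rewrite sqrt_mult_alt by apply Rle_0_sqr. rewrite sqrt_Rsqr_abs. reflexivity.
Qed.

Lemma Dcos th x : Derive (fun t => cos (th * t)) x = - th * sin (th * x).
Proof. apply is_derive_unique. auto_derive; auto. ring. Qed.
Lemma Dsin th x : Derive (fun t => sin (th * t)) x = th * cos (th * x).
Proof. apply is_derive_unique. auto_derive; auto. ring. Qed.

Lemma ip_cases (F A : R -> R) (Nn : nat) (q : Z) (a1 a2 : nat) :
  (0 < Nn)%nat -> CA (INR Nn) A -> (forall x, 0 <= x <= 1 -> F x = A x) -> (forall x, continuous A x) -> A 1 = A 0 ->
  (a1 <= 1)%nat -> (a2 <= 1)%nat ->
  Cmod (ip (Dc a1 (cf F)) (Dc a2 (xi q))) =
   Rabs (2 * PI * IZR q) ^ (a1 + a2) *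
   sqrt (RInt (fun x => A x * cos (2 * PI * IZR q * x)) 0 1 ^ 2 + RInt (fun x => A x * sin (2 * PI * IZR q * x)) 0 1 ^ 2).
Proof.
  intros HN HCA HF HAc HA Ha1 Ha2.
  set (th := 2 * PI * IZR q).
  assert (Hper : cos (th * 1) = cos (th * 0) /\ sin (th * 1) = sin (th * 0)).
  { replace (th * 1) with (0 + 2 * PI * IZR q) by (unfold th; ring). replace (th * 0) with 0 by ring. apply trig_perZ. }
  destruct Hper as [Hc1 Hs1].
  assert (HcA : forall x, continuous (fun x => A x * cos (th * x)) x) by (intros; apply cont_Rmult; auto; smooth0).
  assert (HsA : forall x, continuous (fun x => A x * sin (th * x)) x) by (intros; apply cont_Rmult; auto; smooth0).
  set (Ic := RInt (fun x => A x * cos (th * x)) 0 1).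
  set (Is := RInt (fun x => A x * sin (th * x)) 0 1).
  unfold ip, Dc, cf, xi, RtoC, Cconj, Cmult, Cmod. cbv [fst snd]. fold th.
  destruct a1 as [|[|a1]]; [| |lia]; destruct a2 as [|[|a2]]; [| | lia| | |lia].
  -
    rewrite (RInt01_ext _ (fun x => A x * cos (th * x))) by (intros x Hx; rewrite HF by lra; rng).
    rewrite (RInt01_ext (fun x => F x * - sin (th * x) + 0 * cos (th * x)) (fun x => -1 * (A x * sin (th * x)))) by (intros x Hx; rewrite HF by lra; rng).
    rewrite RInt01_scal by auto. fold Ic Is.
    replace (Rabs th ^ (0+0)) with (Rabs 1) by (simpl; rewrite Rabs_R1; reflexivity). apply sq_fin. ring.
  -
    rewrite (RInt01_ext _ (fun x => (- th) * (A x * sin (th * x)))) by (intros x Hx; rewrite HF by lra; rewrite Dcos, Dsin; rng).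
    rewrite (RInt01_ext (fun x => F x * - Derive (fun t => sin (th * t)) x + 0 * Derive (fun t => cos (th * t)) x) (fun x => (- th) * (A x * cos (th * x)))) by (intros x Hx; rewrite HF by lra; rewrite Dcos, Dsin; rng).
    rewrite !RInt01_scal by auto. fold Ic Is.
    replace (0 + 1)%nat with 1%nat by reflexivity. rewrite pow_1. apply sq_fin. ring.
  -
    rewrite (RInt01_ext _ (fun x => Derive F x * (fun x => cos (th * x)) x)) by (intros x Hx; rewrite Derive_const; cbv beta; change (Derive (fun t => F t)) with (Derive F); rng).
    rewrite (RInt01_ext (fun x => Derive (fun t => F t) x * - sin (th * x) + Derive (fun _ => 0) x * cos (th * x))
                        (fun x => Derive F x * (fun x => - sin (th * x)) x)) by (intros x Hx; rewrite Derive_const; cbv beta; change (Derive (fun t => F t)) with (Derive F); rng).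
    rewrite (ibp0 Nn F A (fun x => cos (th * x)) (fun x => - th * sin (th * x))); auto;
      [| intros; auto_derive; auto; ring | intros; smooth0 | intros; smooth0].
    rewrite (ibp0 Nn F A (fun x => - sin (th * x)) (fun x => - th * cos (th * x))); auto;
      [| intros; auto_derive; auto; ring | intros; smooth0 | intros; smooth0 | cbv beta; rewrite Hs1; reflexivity].
    rewrite (RInt01_ext (fun x => A x * (- th * sin (th * x))) (fun x => (- th) * (A x * sin (th * x)))) by (intros; ring).
    rewrite (RInt01_ext (fun x => A x * (- th * cos (th * x))) (fun x => (- th) * (A x * cos (th * x)))) by (intros; ring).
    rewrite !RInt01_scal by auto. fold Ic Is.
    replace (1 + 0)%nat with 1%nat by reflexivity. rewrite pow_1. apply sq_fin. ring.
  -
    rewrite (RInt01_ext _ (fun x => Derive F x * (fun x => - th * sin (th * x)) x)) by (intros x Hx; rewrite Derive_const, Dcos, Dsin; cbv beta; change (Derive (fun t => F t)) with (Derive F); rng).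
    rewrite (RInt01_ext (fun x => Derive (fun t => F t) x * - Derive (fun t => sin (th * t)) x + Derive (fun _ => 0) x * Derive (fun t => cos (th * t)) x)
                        (fun x => Derive F x * (fun x => - (th * cos (th * x))) x)) by (intros x Hx; rewrite Derive_const, Dcos, Dsin; cbv beta; change (Derive (fun t => F t)) with (Derive F); rng).
    rewrite (ibp0 Nn F A (fun x => - th * sin (th * x)) (fun x => - th * th * cos (th * x))); auto;
      [| intros; auto_derive; auto; ring | intros; smooth0 | intros; smooth0 | cbv beta; rewrite Hs1; reflexivity].
    rewrite (ibp0 Nn F A (fun x => - (th * cos (th * x))) (fun x => th * th * sin (th * x))); auto;
      [| intros; auto_derive; auto; ring | intros; smooth0 | intros; smooth0 | cbv beta; rewrite Hc1; reflexivity].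
    rewrite (RInt01_ext (fun x => A x * (- th * th * cos (th * x))) (fun x => (- th * th) * (A x * cos (th * x)))) by (intros; ring).
    rewrite (RInt01_ext (fun x => A x * (th * th * sin (th * x))) (fun x => (th * th) * (A x * sin (th * x)))) by (intros; ring).
    rewrite !RInt01_scal by auto. fold Ic Is.
    replace (1 + 1)%nat with 2%nat by reflexivity. replace (Rabs th ^ 2) with (Rabs (th * th)) by (rewrite Rabs_mult; ring).
    apply sq_fin. ring.
Qed.

Lemma CA_shift (Nn : nat) f (j : Z) : (0 < Nn)%nat -> CA (INR Nn) f -> CA (INR Nn) (fun x => f (x + IZR j)).
Proof.
  intros HN HCA m x Hx. set (N := INR Nn). change (INR Nn) with N in Hx, HCA |- *.
  assert (HN' : 0 < N) by (apply lt_0_INR; exact HN).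
  set (m' := (m + j * Z.of_nat Nn)%Z).
  assert (Hm : IZR m' = IZR m + IZR j * N) by (unfold m', N; rewrite plus_IZR, mult_IZR, <- INR_IZR_INZ; reflexivity).
  clearbody N m'.
  assert (e1 : IZR m' / N = IZR m / N + IZR j) by (rewrite Hm; field; lra).
  assert (e2 : (IZR m' + 1) / N = (IZR m + 1) / N + IZR j) by (rewrite Hm; field; lra).
  assert (e3 : N * (x + IZR j) - IZR m' = N * x - IZR m) by (rewrite Hm; ring).
  assert (Hx' : IZR m' / N <= x + IZR j <= (IZR m' + 1) / N) by (rewrite e1, e2; lra).
  pose proof (HCA m' (x + IZR j) Hx') as H. rewrite e1, e2, e3 in H. exact H.
Qed.

Lemma cont_shift (f : R -> R) s : (forall x, continuous f x) -> forall x, continuous (fun t => f (t + s)) x.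
Proof.
  intros Hf x. apply (continuous_comp (fun t => t + s) f). apply cont_Rplus. apply continuous_id. apply continuous_const. apply Hf.
Qed.

Lemma master (f : R -> R) (Nn : nat) (q : Z) (a1 a2 : nat) :
  (0 < Nn)%nat -> (forall y, 2 <= y -> f y = 0) -> (forall y, y <= -1 -> f y = 0) ->
  (forall x, continuous f x) -> CA (INR Nn) f -> (a1 <= 1)%nat -> (a2 <= 1)%nat ->
  Cmod (ip (Dc a1 (cf (per f))) (Dc a2 (xi q))) =
   Rabs (2 * PI * IZR q) ^ (a1 + a2) *
   sqrt (RInt (fun x => f x * cos (2 * PI * IZR q * x)) (-1) 2 ^ 2 + RInt (fun x => f x * sin (2 * PI * IZR q * x)) (-1) 2 ^ 2).
Proof.
  intros HN H2 H1 Hc HCA Ha1 Ha2.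
  set (A := fun x => f (x - 1) + f x + f (x + 1)).
  assert (HAc : forall x, continuous A x).
  { intros x. unfold A. apply cont_Rplus. apply cont_Rplus.
    apply (cont_shift f (-1)); auto. auto. apply (cont_shift f 1); auto. }
  assert (HCAA : CA (INR Nn) A).
  { unfold A. apply CA_plus. apply CA_plus.
    apply (CA_ext _ (fun x => f (x + IZR (-1)))). intros; reflexivity.
    apply CA_shift; auto. exact HCA.
    apply (CA_ext _ (fun x => f (x + IZR 1))). intros; reflexivity.
    apply CA_shift; auto. }
  assert (HA1 : A 1 = A 0).
  { unfold A. replace (1 - 1) with 0 by ring. replace (1 + 1) with 2 by ring. replace (0 - 1) with (-1) by ring.
    replace (0 + 1) with 1 by ring. rewrite (H2 2), (H1 (-1)) by lra. ring. }
  rewrite (ip_cases (per f) A Nn q a1 a2); auto.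
  2: { intros x Hx. unfold A. apply per3; auto. }
  set (th := 2 * PI * IZR q).
  assert (Hper : forall x, cos (th * (x + 1)) = cos (th * x) /\ sin (th * (x + 1)) = sin (th * x)).
  { intros x. replace (th * (x + 1)) with (th * x + 2 * PI * IZR q) by (unfold th; ring). apply trig_perZ. }
  assert (Ec : RInt (fun x => A x * cos (th * x)) 0 1 = RInt (fun x => f x * cos (th * x)) (-1) 2).
  { apply (is_RInt_unique (V:=R_CompleteNormedModule)). unfold A.
    apply (shift3 f (fun x => cos (th * x))); auto. intros; smooth0. intros; apply Hper. }
  assert (Es : RInt (fun x => A x * sin (th * x)) 0 1 = RInt (fun x => f x * sin (th * x)) (-1) 2).
  { apply (is_RInt_unique (V:=R_CompleteNormedModule)). unfold A.
    apply (shift3 f (fun x => sin (th * x))); auto. intros; smooth0. intros; apply Hper. }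
  rewrite Ec, Es. reflexivity.
Qed.

Lemma INR_2pow l : INR (2 ^ l) = 2 ^ l.
Proof. rewrite pow_INR. replace (INR 2) with 2 by (simpl; ring). reflexivity. Qed.

Lemma k_bound l k : (k < 2 ^ l)%nat -> INR k + 1 <= 2 ^ l.
Proof. intros H. rewrite <- INR_2pow, <- S_INR. apply le_INR. lia. Qed.

Lemma hat_aff_cont C N a x : continuous (fun x => C * hat (N * x - a)) x.
Proof.
  apply cont_Rmult. apply continuous_const.
  apply (continuous_comp (fun x => N * x - a) hat). smooth0. apply hat_cont.
Qed.

Lemma RInt_cmul (g : R -> R) a b v C : is_RInt g a b v -> RInt (fun x => C * g x) a b = C * v.
Proof. intros H. apply (is_RInt_unique (V:=R_CompleteNormedModule)). apply (is_RInt_scal (V:=R_NormedModule) _ _ _ C _ H). Qed.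

Lemma phi_val l k q a1 a2 : (k < 2 ^ l)%nat -> (a1 <= 1)%nat -> (a2 <= 1)%nat ->
  Cmod (ip (Dc a1 (cf (phi_lk l k))) (Dc a2 (xi q))) =
  Rabs (2 * PI * IZR q) ^ (a1 + a2) *
   (Rpower 2 (INR l / 2) * J (2 * PI * IZR q / 2 ^ l) / 2 ^ l).
Proof.
  intros Hk Ha1 Ha2.
  set (C := Rpower 2 (INR l / 2)). set (Nr := 2 ^ l).
  assert (HC : 0 < C) by (unfold C, Rpower; apply exp_pos).
  assert (HNr : 1 <= Nr) by (apply pow_R1_Rle; lra).
  pose proof (k_bound l k Hk) as Hkb. fold Nr in Hkb. pose proof (pos_INR k) as Hk0.
  assert (Hf : forall x, dilate hat l k x = C * hat (Nr * x - INR k)) by reflexivity.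
  unfold phi_lk. rewrite (master (dilate hat l k) (2 ^ l) q a1 a2); auto.
  - f_equal. set (th := 2 * PI * IZR q).
    rewrite (RInt_ext _ (fun x => C * (hat (Nr * x - INR k) * cos (th * x)))) by (intros; rewrite Hf; rng).
    rewrite (RInt_ext (fun x => dilate hat l k x * sin (th * x)) (fun x => C * (hat (Nr * x - INR k) * sin (th * x)))) by (intros; rewrite Hf; rng).
    rewrite (RInt_cmul _ _ _ _ C (atom_cos Nr (INR k) th ltac:(lra) ltac:(lra) ltac:(lra))).
    rewrite (RInt_cmul _ _ _ _ C (atom_sin Nr (INR k) th ltac:(lra) ltac:(lra) ltac:(lra))).
    rewrite (sq_fin (C * J (th / Nr) / Nr) (cos (th * INR k / Nr)) (sin (th * INR k / Nr))).
    + pose proof (sin2_cos2 (th * INR k / Nr)) as Hsc. unfold Rsqr in Hsc.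
      replace (cos (th * INR k / Nr) ^ 2 + sin (th * INR k / Nr) ^ 2) with 1 by (simpl; lra).
      rewrite sqrt_1, Rmult_1_r. apply Rabs_right.
      destruct (J_bounds (th / Nr)) as [[HJ _] _].
      apply Rle_ge. unfold Rdiv. apply Rmult_le_pos; [apply Rmult_le_pos|]; try lra. left; apply Rinv_0_lt_compat; lra.
    + unfold Rdiv; ring.
  - apply Nat.neq_0_lt_0. apply Nat.pow_nonzero. lia.
  - intros y Hy. rewrite Hf. rewrite hat_out. ring. rewrite Rabs_right.
    assert (Nr * y >= Nr * 2) by (apply Rmult_ge_compat_l; lra). lra.
    assert (Nr * y >= Nr * 2) by (apply Rmult_ge_compat_l; lra). lra.
  - intros y Hy. rewrite Hf. rewrite hat_out. ring. rewrite Rabs_left1.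
    assert (Nr * y <= Nr * -1) by (apply Rmult_le_compat_l; lra). lra.
    assert (Nr * y <= Nr * -1) by (apply Rmult_le_compat_l; lra). lra.
  - intros x. apply (continuous_ext (fun x => C * hat (Nr * x - INR k))). intros; symmetry; apply Hf. apply hat_aff_cont.
  - apply (CA_ext _ (fun x => C * hat (INR (2 ^ l) * x - IZR (Z.of_nat k)))).
    intros x. rewrite Hf, INR_2pow, <- INR_IZR_INZ. reflexivity.
    apply CA_scal. apply CA_hat. rewrite INR_2pow; fold Nr; lra. eauto.
Qed.

Lemma psi_eq z : psi z = 1/4 * hat (2*z + 1) + 1/2 * hat (2*z) + -3/2 * hat (2*z - 1) + 1/2 * hat (2*z - 2) + 1/4 * hat (2*z - 3).
Proof.
  unfold psi, bfilt. cbn [List.length List.seq List.map List.fold_right List.nth].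
  change (INR 0) with 0. change (INR 1) with 1. change (INR 2) with (1+1). change (INR 3) with (1+1+1). change (INR 4) with (1+1+1+1).
  replace (2 * z - (0 - 1)) with (2*z + 1) by ring.
  replace (2 * z - (1 - 1)) with (2*z) by ring.
  replace (2 * z - (1 + 1 - 1)) with (2*z - 1) by ring.
  replace (2 * z - (1 + 1 + 1 - 1)) with (2*z - 2) by ring.
  replace (2 * z - (1 + 1 + 1 + 1 - 1)) with (2*z - 3) by ring.
  ring.
Qed.

Lemma is_RInt_add (f g : R -> R) a b u v : is_RInt f a b u -> is_RInt g a b v -> is_RInt (fun x => f x + g x) a b (u + v).
Proof. intros. apply (is_RInt_plus (V:=R_NormedModule)); auto. Qed.
Lemma is_RInt_cm (f : R -> R) c a b u : is_RInt f a b u -> is_RInt (fun x => c * f x) a b (c * u).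
Proof. intros. apply (is_RInt_scal (V:=R_NormedModule)); auto. Qed.

Lemma lin5 (h1 h2 h3 h4 h5 : R -> R) v1 v2 v3 v4 v5 c1 c2 c3 c4 c5 a b :
  is_RInt h1 a b v1 -> is_RInt h2 a b v2 -> is_RInt h3 a b v3 -> is_RInt h4 a b v4 -> is_RInt h5 a b v5 ->
  is_RInt (fun x => c1 * h1 x + c2 * h2 x + c3 * h3 x + c4 * h4 x + c5 * h5 x) a b
    (c1 * v1 + c2 * v2 + c3 * v3 + c4 * v4 + c5 * v5).
Proof.
  intros H1 H2 H3 H4 H5.
  apply (is_RInt_add (fun x => c1 * h1 x + c2 * h2 x + c3 * h3 x + c4 * h4 x) (fun x => c5 * h5 x)); [|apply is_RInt_cm; auto].
  apply (is_RInt_add (fun x => c1 * h1 x + c2 * h2 x + c3 * h3 x) (fun x => c4 * h4 x)); [|apply is_RInt_cm; auto].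
  apply (is_RInt_add (fun x => c1 * h1 x + c2 * h2 x) (fun x => c3 * h3 x)); [|apply is_RInt_cm; auto].
  apply (is_RInt_add (fun x => c1 * h1 x) (fun x => c2 * h2 x)); apply is_RInt_cm; auto.
Qed.

Definition Sc (th N k : R) := 1/4 * cos (th * (2*k - 1) / N) + 1/2 * cos (th * (2*k) / N) + -3/2 * cos (th * (2*k+1) / N)
  + 1/2 * cos (th * (2*k+2) / N) + 1/4 * cos (th * (2*k+3) / N).
Definition Ss (th N k : R) := 1/4 * sin (th * (2*k - 1) / N) + 1/2 * sin (th * (2*k) / N) + -3/2 * sin (th * (2*k+1) / N)
  + 1/2 * sin (th * (2*k+2) / N) + 1/4 * sin (th * (2*k+3) / N).

Lemma psi_val l k q a1 a2 : (k < 2 ^ l)%nat -> (a1 <= 1)%nat -> (a2 <= 1)%nat ->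
  Cmod (ip (Dc a1 (cf (psi_lk l k))) (Dc a2 (xi q))) =
  Rabs (2 * PI * IZR q) ^ (a1 + a2) *
   (Rpower 2 (INR l / 2) * J (2 * PI * IZR q / (2 * 2 ^ l)) / (2 * 2 ^ l) *
    sqrt (Sc (2 * PI * IZR q) (2 * 2 ^ l) (INR k) ^ 2 + Ss (2 * PI * IZR q) (2 * 2 ^ l) (INR k) ^ 2)).
Proof.
  intros Hk Ha1 Ha2.
  set (C := Rpower 2 (INR l / 2)). set (Nr := 2 ^ l). set (N2 := 2 * Nr). set (kk := INR k).
  assert (HC : 0 < C) by (unfold C, Rpower; apply exp_pos).
  assert (HNr : 1 <= Nr) by (apply pow_R1_Rle; lra).
  pose proof (k_bound l k Hk) as Hkb. fold Nr kk in Hkb. assert (Hk0 : 0 <= kk) by apply pos_INR.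
  assert (Hf : forall x, dilate psi l k x = C * (1/4 * hat (N2 * x - (2*kk - 1)) + 1/2 * hat (N2 * x - (2*kk))
     + -3/2 * hat (N2 * x - (2*kk+1)) + 1/2 * hat (N2 * x - (2*kk+2)) + 1/4 * hat (N2 * x - (2*kk+3)))).
  { intros x. unfold dilate. rewrite psi_eq. fold C Nr kk. unfold N2.
    replace (2 * (Nr * x - kk) + 1) with (2 * Nr * x - (2*kk - 1)) by ring.
    replace (2 * (Nr * x - kk) - 1) with (2 * Nr * x - (2*kk + 1)) by ring.
    replace (2 * (Nr * x - kk) - 2) with (2 * Nr * x - (2*kk + 2)) by ring.
    replace (2 * (Nr * x - kk) - 3) with (2 * Nr * x - (2*kk + 3)) by ring.
    replace (2 * (Nr * x - kk)) with (2 * Nr * x - (2*kk)) by ring.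
    reflexivity. }
  unfold psi_lk. rewrite (master (dilate psi l k) (2 ^ S l) q a1 a2); auto.
  - f_equal. set (th := 2 * PI * IZR q).
    assert (Hc : forall Tr : R -> R, forall x, dilate psi l k x * Tr (th * x) =
       C * (1/4 * (hat (N2 * x - (2*kk - 1)) * Tr (th * x)) + 1/2 * (hat (N2 * x - (2*kk)) * Tr (th * x))
     + -3/2 * (hat (N2 * x - (2*kk+1)) * Tr (th * x)) + 1/2 * (hat (N2 * x - (2*kk+2)) * Tr (th * x))
     + 1/4 * (hat (N2 * x - (2*kk+3)) * Tr (th * x)))).
    { intros Tr x. rewrite Hf. ring. }
    rewrite (RInt_ext _ _ _ _ (fun x _ => Hc cos x)).
    rewrite (RInt_ext _ _ _ _ (fun x _ => Hc sin x)).
    assert (HN2 : 2 <= N2) by (unfold N2; lra). assert (HN2e : N2 = 2 * Nr) by reflexivity.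
    rewrite (RInt_cmul _ _ _ _ C (lin5 _ _ _ _ _ _ _ _ _ _ (1/4) (1/2) (-3/2) (1/2) (1/4) _ _
      (atom_cos N2 (2*kk-1) th ltac:(lra) ltac:(lra) ltac:(lra))
      (atom_cos N2 (2*kk) th ltac:(lra) ltac:(lra) ltac:(lra))
      (atom_cos N2 (2*kk+1) th ltac:(lra) ltac:(lra) ltac:(lra))
      (atom_cos N2 (2*kk+2) th ltac:(lra) ltac:(lra) ltac:(lra))
      (atom_cos N2 (2*kk+3) th ltac:(lra) ltac:(lra) ltac:(lra)))).
    rewrite (RInt_cmul _ _ _ _ C (lin5 _ _ _ _ _ _ _ _ _ _ (1/4) (1/2) (-3/2) (1/2) (1/4) _ _
      (atom_sin N2 (2*kk-1) th ltac:(lra) ltac:(lra) ltac:(lra))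
      (atom_sin N2 (2*kk) th ltac:(lra) ltac:(lra) ltac:(lra))
      (atom_sin N2 (2*kk+1) th ltac:(lra) ltac:(lra) ltac:(lra))
      (atom_sin N2 (2*kk+2) th ltac:(lra) ltac:(lra) ltac:(lra))
      (atom_sin N2 (2*kk+3) th ltac:(lra) ltac:(lra) ltac:(lra)))).
    rewrite (sq_fin (C * J (th / N2) / N2) (Sc th N2 kk) (Ss th N2 kk)).
    + f_equal. apply Rabs_right.
      destruct (J_bounds (th / N2)) as [[HJ _] _].
      apply Rle_ge. unfold Rdiv. apply Rmult_le_pos; [apply Rmult_le_pos|]; try lra. left; apply Rinv_0_lt_compat; lra.
    + unfold Sc, Ss. unfold Rdiv. ring.
  - apply Nat.neq_0_lt_0. apply Nat.pow_nonzero. lia.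
  - intros y Hy. rewrite Hf.
    assert (N2 * y >= N2 * 2) by (apply Rmult_ge_compat_l; unfold N2; lra).
    rewrite !hat_out; try (rewrite Rabs_right; unfold N2 in *; lra). ring.
  - intros y Hy. rewrite Hf.
    assert (N2 * y <= N2 * -1) by (apply Rmult_le_compat_l; unfold N2; lra).
    rewrite !hat_out; try (rewrite Rabs_left1; unfold N2 in *; lra). ring.
  - intros x. apply (continuous_ext (fun x => C * (1/4 * hat (N2 * x - (2*kk - 1)) + 1/2 * hat (N2 * x - (2*kk))
     + -3/2 * hat (N2 * x - (2*kk+1)) + 1/2 * hat (N2 * x - (2*kk+2)) + 1/4 * hat (N2 * x - (2*kk+3))))).
    intros; symmetry; apply Hf.
    apply cont_Rmult. apply continuous_const.
    repeat apply cont_Rplus; apply hat_aff_cont.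
  - apply (CA_ext _ (fun x => C * (1/4 * hat (N2 * x - (2*kk - 1)) + 1/2 * hat (N2 * x - (2*kk))
     + -3/2 * hat (N2 * x - (2*kk+1)) + 1/2 * hat (N2 * x - (2*kk+2)) + 1/4 * hat (N2 * x - (2*kk+3))))).
    intros; symmetry; apply Hf.
    assert (HI : INR (2 ^ S l) = N2) by (rewrite INR_2pow; reflexivity).
    rewrite HI.
    assert (HN2 : 0 < N2) by (unfold N2; lra).
    apply CA_scal. repeat apply CA_plus; apply CA_scal; apply CA_hat; auto.
    + exists (2 * Z.of_nat k - 1)%Z. rewrite minus_IZR, mult_IZR, <- INR_IZR_INZ. reflexivity.
    + exists (2 * Z.of_nat k)%Z. rewrite mult_IZR, <- INR_IZR_INZ. reflexivity.
    + exists (2 * Z.of_nat k + 1)%Z. rewrite plus_IZR, mult_IZR, <- INR_IZR_INZ. reflexivity.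
    + exists (2 * Z.of_nat k + 2)%Z. rewrite plus_IZR, mult_IZR, <- INR_IZR_INZ. reflexivity.
    + exists (2 * Z.of_nat k + 3)%Z. rewrite plus_IZR, mult_IZR, <- INR_IZR_INZ. reflexivity.
Qed.

Lemma ln_div' x y : 0 < x -> 0 < y -> ln (x / y) = ln x - ln y.
Proof. intros. unfold Rdiv. rewrite ln_mult, ln_Rinv; auto. apply Rinv_0_lt_compat; auto. Qed.
Lemma exp_div a b : exp a / exp b = exp (a - b).
Proof. unfold Rminus. rewrite exp_plus, exp_Ropp. reflexivity. Qed.

Lemma scale_phi l P g : 0 < P ->
  Rpower 2 (INR l / 2) / 2 ^ l * Rpower (P / 2 ^ l) (g - 2) = Rpower 2 ((3/2 - g) * INR l) * Rpower P (g - 2).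
Proof.
  intros HP. rewrite <- (Rpower_pow l 2) by lra. unfold Rpower.
  rewrite ln_div', ln_exp by (first [apply exp_pos | lra]).
  rewrite exp_div. rewrite <- !exp_plus. f_equal. field.
Qed.

Lemma scale_psi l P g : 0 < P ->
  Rpower 2 (INR l / 2) / (2 * 2 ^ l) * Rpower (P / (2 * 2 ^ l)) (g - 2) =
  Rpower 2 (1 - g) * (Rpower 2 ((3/2 - g) * INR l) * Rpower P (g - 2)).
Proof.
  intros HP. change (2 * 2 ^ l) with (2 ^ S l).
  rewrite <- (Rpower_pow (S l) 2) by lra. rewrite S_INR. unfold Rpower.
  rewrite ln_div', ln_exp by (first [apply exp_pos | lra]).
  rewrite exp_div. rewrite <- !exp_plus. f_equal. field.
Qed.

Lemma J_interp w s g : 0 < s -> w * w = 4 * (s * s) -> 0 <= g <= 2 -> J w <= Rpower s (g - 2).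
Proof.
  intros Hs Hw Hg. destruct (J_bounds w) as [[H0 H1] H2].
  apply interp; auto.
  assert (w <> 0). { intros ->. nra. }
  specialize (H2 H). rewrite Hw in H2. replace (4 / (4 * (s * s))) with (/ (s * s)) in H2 by (field; lra). exact H2.
Qed.

Lemma tri_step X Y b c s B : c * c + s * s = 1 -> sqrt (X ^ 2 + Y ^ 2) <= B ->
  sqrt ((X + b * c) ^ 2 + (Y + b * s) ^ 2) <= B + Rabs b.
Proof.
  intros Hcs HB. eapply Rle_trans. apply tri2. rewrite (unit_term b c s Hcs). lra.
Qed.

Lemma tri5 th N k : sqrt (Sc th N k ^ 2 + Ss th N k ^ 2) <= 3.
Proof.
  unfold Sc, Ss.
  assert (U : forall t, cos t * cos t + sin t * sin t = 1) by (intros t; pose proof (sin2_cos2 t); unfold Rsqr in *; lra).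
  replace 3 with (Rabs (1/4) + Rabs (1/2) + Rabs (-3/2) + Rabs (1/2) + Rabs (1/4))
    by (rewrite (Rabs_right (1/4)), (Rabs_right (1/2)), (Rabs_left (-3/2)) by lra; lra).
  repeat apply tri_step; auto.
  rewrite (unit_term _ _ _ (U _)). lra.
Qed.

Lemma bnorm_ge3 : 3 <= bnorm2 * sqrt (INR bnorm0).
Proof.
  assert (H0 : bnorm0 = 5%nat).
  { unfold bnorm0, bfilt. cbn [filter].
    repeat (destruct Req_EM_T; [lra|]). reflexivity. }
  rewrite H0. unfold bnorm2, bfilt. cbn [map fold_right].
  rewrite <- sqrt_mult_alt by lra.
  rewrite <- (sqrt_square 3) by lra. apply sqrt_le_1_alt. change (INR 5) with (1+1+1+1+1). lra.
Qed.

Lemma Sc0 N k : Sc 0 N k = 0.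
Proof. unfold Sc. rewrite !Rmult_0_l. replace (0 / N) with 0 by (unfold Rdiv; ring). rewrite cos_0. field. Qed.
Lemma Ss0 N k : Ss 0 N k = 0.
Proof. unfold Ss. rewrite !Rmult_0_l. replace (0 / N) with 0 by (unfold Rdiv; ring). rewrite sin_0. field. Qed.

Theorem lemma4p1 (l0 : nat) (Hl0 : (2 <= l0)%nat) :
  (forall (l k : nat) (q : Z) (a1 a2 : nat) (g : R),
     (l0 <= l)%nat -> (k < 2 ^ l)%nat -> q <> 0%Z ->
     (a1 <= 1)%nat -> (a2 <= 1)%nat -> 0 <= g <= 2 ->
     Cmod (ip (Dc a1 (cf (phi_lk l k))) (Dc a2 (xi q)))
       <= 2 ^ (a1 + a2) * Rpower 2 ((3/2 - g) * INR l)
          * Rpower (Rabs (PI * IZR q)) (g - 2 + INR a1 + INR a2)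
     /\
     Cmod (ip (Dc a1 (cf (psi_lk l k))) (Dc a2 (xi q)))
       <= Rpower 2 (INR a1 + INR a2 + 1 - g) * bnorm2 * sqrt (INR bnorm0)
          * Rpower 2 ((3/2 - g) * INR l)
          * Rpower (Rabs (PI * IZR q)) (g - 2 + INR a1 + INR a2))
  /\
  (forall (l k : nat),
     (l0 <= l)%nat -> (k < 2 ^ l)%nat ->
     Cmod (ip (Dc 1 (cf (phi_lk l k))) (Dc 1 (xi 0))) = 0 /\
     Cmod (ip (Dc 1 (cf (psi_lk l k))) (Dc 1 (xi 0))) = 0 /\
     Cmod (ip (Dc 1 (cf (phi_lk l k))) (xi 0)) = 0 /\
     Cmod (ip (Dc 1 (cf (psi_lk l k))) (xi 0)) = 0 /\
     Cmod (ip (cf (phi_lk l k)) (xi 0)) = Rpower 2 (- INR l / 2) /\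
     Cmod (ip (cf (psi_lk l k)) (xi 0)) = 0).
Proof.
  split.
  - intros l k q a1 a2 g Hl Hk Hq Ha1 Ha2 Hg.
    set (P := Rabs (PI * IZR q)).
    assert (HPI := PI_RGT_0).
    assert (HP : 0 < P).
    { unfold P. apply Rabs_pos_lt. apply Rmult_integral_contrapositive_currified. lra. apply not_0_IZR; auto. }
    assert (Hth : Rabs (2 * PI * IZR q) = 2 * P).
    { unfold P. rewrite Rmult_assoc, Rabs_mult, (Rabs_right 2) by lra. reflexivity. }
    assert (Hth2 : (2 * PI * IZR q) * (2 * PI * IZR q) = 4 * (P * P)).
    { unfold P. rewrite <- Rabs_mult. rewrite Rabs_right by (apply Rle_ge; apply Rle_0_sqr). ring. }
    assert (Hexp : Rpower P (g - 2 + INR a1 + INR a2) = Rpower P (g - 2) * P ^ (a1 + a2)).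
    { replace (g - 2 + INR a1 + INR a2) with (g - 2 + INR (a1 + a2)) by (rewrite plus_INR; ring).
      rewrite Rpower_plus, Rpower_pow; auto. }
    assert (HNr : 1 <= 2 ^ l) by (apply pow_R1_Rle; lra).
    set (C := Rpower 2 (INR l / 2)).
    assert (HC : 0 < C) by (unfold C, Rpower; apply exp_pos).
    assert (Hn : 0 <= 2 ^ (a1 + a2) * P ^ (a1 + a2)) by (apply Rmult_le_pos; apply pow_le; lra).
    split.
    + rewrite phi_val by auto. fold C. rewrite Hth, Rpow_mult_distr, Hexp.
      assert (HJ : J (2 * PI * IZR q / 2 ^ l) <= Rpower (P / 2 ^ l) (g - 2)).
      { apply J_interp; auto. apply Rdiv_lt_0_compat; lra.
        unfold Rdiv. replace (2 * PI * IZR q * / 2 ^ l * (2 * PI * IZR q * / 2 ^ l))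
          with ((2 * PI * IZR q) * (2 * PI * IZR q) * (/ 2 ^ l * / 2 ^ l)) by ring.
        rewrite Hth2. ring. }
      pose proof (scale_phi l P g HP) as Hs. fold C in Hs.
      destruct (J_bounds (2 * PI * IZR q / 2 ^ l)) as [[HJ0 _] _].
      assert (HK : 0 <= C / 2 ^ l) by (apply Rdiv_le_0_compat; lra).
      apply Rle_trans with (2 ^ (a1 + a2) * P ^ (a1 + a2) * (C / 2 ^ l * Rpower (P / 2 ^ l) (g - 2))).
      * apply Rmult_le_compat_l; auto.
        replace (C * J (2 * PI * IZR q / 2 ^ l) / 2 ^ l) with (C / 2 ^ l * J (2 * PI * IZR q / 2 ^ l)) by (field; lra).
        apply Rmult_le_compat_l; auto.
      * rewrite Hs. right; ring.
    + rewrite psi_val by auto. fold C. rewrite Hth, Rpow_mult_distr, Hexp.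
      assert (HJ : J (2 * PI * IZR q / (2 * 2 ^ l)) <= Rpower (P / (2 * 2 ^ l)) (g - 2)).
      { apply J_interp; auto. apply Rdiv_lt_0_compat; lra.
        unfold Rdiv. replace (2 * PI * IZR q * / (2 * 2 ^ l) * (2 * PI * IZR q * / (2 * 2 ^ l)))
          with ((2 * PI * IZR q) * (2 * PI * IZR q) * (/ (2 * 2 ^ l) * / (2 * 2 ^ l))) by ring.
        rewrite Hth2. ring. }
      pose proof (scale_psi l P g HP) as Hs. fold C in Hs.
      destruct (J_bounds (2 * PI * IZR q / (2 * 2 ^ l))) as [[HJ0 _] _].
      assert (HK : 0 <= C / (2 * 2 ^ l)) by (apply Rdiv_le_0_compat; lra).
      pose proof (tri5 (2 * PI * IZR q) (2 * 2 ^ l) (INR k)) as Ht.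
      pose proof bnorm_ge3 as Hb.
      set (Sq := sqrt (Sc (2 * PI * IZR q) (2 * 2 ^ l) (INR k) ^ 2 + Ss (2 * PI * IZR q) (2 * 2 ^ l) (INR k) ^ 2)) in *.
      assert (HSq : 0 <= Sq) by apply sqrt_pos.
      set (Jv := J (2 * PI * IZR q / (2 * 2 ^ l))) in *.
      set (Rp := Rpower (P / (2 * 2 ^ l)) (g - 2)) in *.
      set (B := bnorm2 * sqrt (INR bnorm0)) in *.
      assert (HRp : 0 <= Rp) by lra.
      replace (Rpower 2 (INR a1 + INR a2 + 1 - g)) with (2 ^ (a1 + a2) * Rpower 2 (1 - g))
        by ((rewrite <- (Rpower_pow (a1 + a2) 2), <- Rpower_plus, plus_INR by lra); f_equal; ring).
      apply Rle_trans with (2 ^ (a1 + a2) * P ^ (a1 + a2) * (C / (2 * 2 ^ l) * Rp * B)).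
      * apply Rmult_le_compat_l; auto.
        replace (C * Jv / (2 * 2 ^ l) * Sq) with (C / (2 * 2 ^ l) * Jv * Sq) by (field; lra).
        apply Rmult_le_compat. apply Rmult_le_pos; lra. auto.
        apply Rmult_le_compat_l; auto. lra.
      * rewrite Hs. right. unfold B. ring.
  - intros l k Hl Hk.
    assert (HNr : 1 <= 2 ^ l) by (apply pow_R1_Rle; lra).
    assert (Z0 : 2 * PI * IZR 0 = 0) by (simpl; ring).
    repeat split.
    + rewrite phi_val by lia. rewrite Z0, Rabs_R0, pow_i by lia. ring.
    + rewrite psi_val by lia. rewrite Z0, Rabs_R0, pow_i by lia. ring.
    + change (xi 0) with (Dc 0 (xi 0)). rewrite phi_val by lia. rewrite Z0, Rabs_R0, pow_i by lia. ring.
    + change (xi 0) with (Dc 0 (xi 0)). rewrite psi_val by lia. rewrite Z0, Rabs_R0, pow_i by lia. ring.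
    + change (ip (cf (phi_lk l k)) (xi 0)) with (ip (Dc 0 (cf (phi_lk l k))) (Dc 0 (xi 0))).
      rewrite phi_val by lia. rewrite Z0. replace (0 + 0)%nat with 0%nat by reflexivity. rewrite pow_O.
      replace (0 / 2 ^ l) with 0 by (unfold Rdiv; ring).
      unfold J; destruct (Req_EM_T 0 0) as [_|Hn]; [|lra].
      rewrite <- (Rpower_pow l 2) by lra. unfold Rpower. rewrite Rmult_1_r, exp_div, Rmult_1_l. f_equal. field.
    + change (ip (cf (psi_lk l k)) (xi 0)) with (ip (Dc 0 (cf (psi_lk l k))) (Dc 0 (xi 0))).
      rewrite psi_val by lia. rewrite Z0, Sc0, Ss0. replace (0 ^ 2 + 0 ^ 2) with 0 by ring. rewrite sqrt_0. ring.
Qed.
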